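(* Let $D$ be a principal ideal domain, $\alpha\in D$ a prime element, $n\ge1$, and $\overline{D}:=D/(\alpha^n)$. Let $1\leqslant j\leqslant r$, let $M$ be a free $\overline{D}$-module with basis $e_1,\dots,e_r$, and let $N=\bigoplus_{i=1}^jx_i\overline{D}$ be a submodule of $M$ (an internal direct sum) with $x_i\in M$ and $\mathrm{Ann}(x_i)=(\alpha^{n_i})/(\alpha^n)\neq\overline{D}$ for $i=1,\dots,j$. Then $M/N\cong\bigoplus_{i=1}^rD/(\alpha^{n-n_i})$, where $n_i:=0$ for $j<i\leq r$. *)

(* Defs.v *)
From HB Require Import structures.
From mathcomp Require Import all_boot all_order all_algebra.
Set Implicit Arguments. Unset Strict Implicit. Unset Printing Implicit Defensive.
Import Order.TTheory GRing.Theory Num.Theory.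
Local Open Scope ring_scope.

Definition dvdD (D : comRingType) (a b : D) : Prop := exists c : D, b = c * a.

Definition is_ideal (D : comRingType) (I : D -> Prop) : Prop :=
  [/\ I 0, (forall x y, I x -> I y -> I (x + y)) & (forall r x, I x -> I (r * x))].

Definition is_PID (D : idomainType) : Prop :=
  forall I : D -> Prop, is_ideal I -> exists a : D, forall x, I x <-> dvdD a x.

Definition prime_elt (D : idomainType) (p : D) : Prop :=
  [/\ p != 0, p \isn't a GRing.unit &
      forall a b : D, dvdD p (a * b) -> dvdD p a \/ dvdD p b].

(* Main.v *)
From HB Require Import structures.
From mathcomp Require Import all_boot all_order all_algebra all_fingroup.
From mathcomp Require Import boolp ring zify.
Require Import Defs.
Set Implicit Arguments. Unset Strict Implicit. Unset Printing Implicit Defensive.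
Import Order.TTheory GRing.Theory Num.Theory.
Local Open Scope ring_scope.

Section Img.
Variables (R : pzRingType) (U V W : lmodType R).

Definition imgP (g : U -> V) (hg : linear g) : pred V := fun v => `[< exists u, v = g u >].

Lemma imgP_mem (g : U -> V) (hg : linear g) u : g u \in imgP hg.
Proof. by apply/asboolP; exists u. Qed.

Lemma imgP_closed (g : U -> V) (hg : linear g) : subsemimod_closed (imgP hg).
Proof.
have h0 : g 0 = 0 by have := hg (-1) 0 0; rewrite scaler0 add0r scaleN1r addNr.
split; last first.
  move=> a v1 /asboolP[u1 ->].
  apply/asboolP; exists (a *: u1).
  by rewrite -[a *: u1]addr0 hg h0 addr0.
split.
  by apply/asboolP; exists 0.
move=> v1 v2 /asboolP[u1 ->] /asboolP[u2 ->].
by apply/asboolP; exists (1 *: u1 + u2); rewrite hg scale1r.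
Qed.

HB.instance Definition _ (g : U -> V) (hg : linear g) :=
  GRing.isSubmodClosed.Build R V (imgP hg) (imgP_closed hg).

Inductive Img (g : U -> V) (hg : linear g) : predArgType := ImgC v & v \in imgP hg.
Definition imgval (g : U -> V) (hg : linear g) (w : Img hg) : V := let: ImgC u _ := w in u.
HB.instance Definition _ (g : U -> V) (hg : linear g) := [isSub for @imgval g hg].
HB.instance Definition _ (g : U -> V) (hg : linear g) := [Choice of Img hg by <:].
HB.instance Definition _ (g : U -> V) (hg : linear g) := [SubChoice_isSubLmodule of Img hg by <:].

Definition gI (g : U -> V) (hg : linear g) (u : U) : Img hg := ImgC (imgP_mem hg u).
Lemma gI_lin (g : U -> V) (hg : linear g) : linear (gI hg).
Proof. by move=> a u1 u2; apply: val_inj => /=; rewrite hg. Qed.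
HB.instance Definition _ (g : U -> V) (hg : linear g) :=
  GRing.isSemilinear.Build R U (Img hg) _ (gI hg) (GRing.semilinear_linear (gI_lin hg)).

Definition kI (g : U -> V) (hg : linear g) (h : W -> V) (hh : linear h)
  (hin : forall w, h w \in imgP hg) (w : W) : Img hg := ImgC (hin w).
Lemma kI_lin (g : U -> V) (hg : linear g) (h : W -> V) (hh : linear h)
  (hin : forall w, h w \in imgP hg) : linear (kI hh hin).
Proof. by move=> a u1 u2; apply: val_inj => /=; rewrite hh. Qed.
HB.instance Definition _ (g : U -> V) (hg : linear g) (h : W -> V) (hh : linear h)
  (hin : forall w, h w \in imgP hg) :=
  GRing.isSemilinear.Build R W (Img hg) _ (kI hh hin) (GRing.semilinear_linear (kI_lin hh hin)).

Lemma Img_eq0 (g : U -> V) (hg : linear g) (p : Img hg) : (p = 0) <-> (imgval p = 0).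
Proof. by split=> [->//|h]; apply: val_inj. Qed.
End Img.


Section Alg.
Variables (D : idomainType) (hPID : is_PID D) (alpha : D) (halpha : prime_elt alpha).

Lemma dvdD_refl (a : D) : dvdD a a. Proof. by exists 1; rewrite mul1r. Qed.
Lemma dvdD_mull (a b c : D) : dvdD a b -> dvdD a (c * b).
Proof. by case=> t ->; exists (c * t); rewrite mulrA. Qed.
Lemma dvdD_add (a b c : D) : dvdD a b -> dvdD a c -> dvdD a (b + c).
Proof. by case=> t -> [s ->]; exists (t + s); rewrite mulrDl. Qed.
Lemma dvdD_opp (a b : D) : dvdD a b -> dvdD a (- b).
Proof. by case=> t ->; exists (- t); rewrite mulNr. Qed.
Lemma dvdD_trans (a b c : D) : dvdD a b -> dvdD b c -> dvdD a c.
Proof. by case=> t -> [s ->]; exists (s * t); rewrite mulrA. Qed.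

Lemma alpha_neq0 : alpha != 0. Proof. by case: halpha. Qed.

Lemma bezout_alpha (c : D) : ~ dvdD alpha c -> exists u w, u * c + w * alpha = 1.
Proof.
move=> nc.
pose I := fun x : D => exists u w, x = u * c + w * alpha.
have hI : is_ideal I.
  split; first by exists 0, 0; rewrite !mul0r addr0.
    by move=> x y [u1 [w1 ->]] [u2 [w2 ->]]; exists (u1 + u2), (w1 + w2);
       rewrite !mulrDl addrACA.
  by move=> t x [u1 [w1 ->]]; exists (t * u1), (t * w1); rewrite mulrDr !mulrA.
have [d hd] := hPID hI.
have [u [w hdI]] : I d by apply/hd/dvdD_refl.
have [q hq] : dvdD d alpha by apply/hd; exists 0, 1; rewrite mul0r add0r mul1r.
have [s hs] : dvdD d c by apply/hd; exists 1, 0; rewrite mul1r mul0r addr0.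
case: halpha => _ _ /(_ q d).
rewrite -hq => /(_ (dvdD_refl _)) [[t ht]|[t ht]]; last first.
  exfalso; apply: nc; exists (s * t); by rewrite hs ht mulrA.
have: alpha * (t * d - 1) = 0.
  by rewrite mulrBr mulr1 mulrA [alpha * t]mulrC -ht -hq subrr.
move/eqP; rewrite mulf_eq0 (negPf alpha_neq0) /= subr_eq0 => /eqP htd.
by exists (t * u), (t * w); rewrite -!mulrA -mulrDr -hdI.
Qed.

Variable (n : nat).

Lemma inv_mod (c : D) : ~ dvdD alpha c -> exists u, dvdD (alpha ^+ n) (u * c - 1).
Proof.
move=> /bezout_alpha [u [w h]].
exists (u * \sum_(i < n) (w * alpha) ^+ i).
exists (- w ^+ n).
have e : u * c = - (w * alpha - 1) by rewrite -h opprB addrK.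
set S := \sum_(i < n) _.
have -> : u * S * c - 1 = - ((- (u * c)) * S - 1) - 1 - 1 by ring.
rewrite e opprK -subrX1 exprMn; ring.
Qed.

Lemma cancel_mod (c d : D) : ~ dvdD alpha c -> dvdD (alpha ^+ n) (d * c) ->
  dvdD (alpha ^+ n) d.
Proof.
move=> /inv_mod [u hu] hdc.
have -> : d = u * (d * c) - d * (u * c - 1) by rewrite mulrBr mulr1 opprB
   mulrCA addrC subrK.
apply: dvdD_add; first exact: dvdD_mull.
exact/dvdD_opp/dvdD_mull.
Qed.

Lemma cancel_pow (c : D) (a b : nat) : (a <= b)%N ->
  dvdD (alpha ^+ b) (c * alpha ^+ a) -> dvdD (alpha ^+ (b - a)) c.
Proof.
move=> hab [t ht]; exists t.
have : (c - t * alpha ^+ (b - a)) * alpha ^+ a = 0.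
  by rewrite mulrBl ht -mulrA -exprD subnK // subrr.
move/eqP; rewrite mulf_eq0 expf_eq0 (negPf alpha_neq0) andbF orbF subr_eq0.
by move/eqP.
Qed.

Lemma not_unit_pow (m : nat) : ~ dvdD (alpha ^+ m.+1) (alpha ^+ m).
Proof.
case=> t ht.
have : alpha ^+ m * (t * alpha - 1) = 0.
  have -> : alpha ^+ m * (t * alpha - 1) = t * alpha ^+ m.+1 - alpha ^+ m.
    by rewrite exprS; ring.
  by rewrite -ht subrr.
move/eqP; rewrite mulf_eq0 expf_eq0 (negPf alpha_neq0) andbF /= subr_eq0 => /eqP h.
case: halpha => _ /negP hn _; apply: hn; apply/unitrP; exists t; split => //.
by rewrite mulrC.
Qed.

Lemma pow_le (a b : nat) : dvdD (alpha ^+ a) (alpha ^+ b) -> (a <= b)%N.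
Proof.
move=> h; rewrite leqNgt; apply/negP => hba.
apply: (@not_unit_pow b); apply: dvdD_trans h.
by exists (alpha ^+ (a - b.+1)); rewrite -exprD subnK.
Qed.

End Alg.

Section Mod.
Variables (D : idomainType) (hPID : is_PID D) (alpha : D) (halpha : prime_elt alpha).
Variables (n : nat) (M : lmodType D) (hMbar : forall m : M, alpha ^+ n *: m = 0).
Variable (r : nat).

Definition basis (y : 'I_r -> M) :=
  (forall m, exists c : 'I_r -> D, m = \sum_(i < r) c i *: y i) /\
  (forall c : 'I_r -> D, \sum_(i < r) c i *: y i = 0 -> forall i, dvdD (alpha ^+ n) (c i)).

Lemma kill (a : D) (m : M) : dvdD (alpha ^+ n) a -> a *: m = 0.
Proof. by case=> t ->; rewrite -scalerA hMbar scaler0. Qed.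

Lemma basis_perm (y : 'I_r -> M) (s : {perm 'I_r}) : basis y -> basis (fun i => y (s i)).
Proof.
case=> hs hi; split.
  move=> m; have [c ->] := hs m; exists (fun i => c (s i)).
  by rewrite (reindex_perm s).
move=> c hc i.
have := hi (fun k => c ((s^-1)%g k)).
rewrite (reindex_perm s) /=.
under eq_bigr do rewrite permK.
by move/(_ hc (s i)); rewrite permK.
Qed.

Lemma coord_congr (y : 'I_r -> M) (c d : 'I_r -> D) (b : 'I_r -> D) : basis y ->
  \sum_i c i *: y i = \sum_i d i *: y i ->
  \sum_i (c i * b i) *: y i = \sum_i (d i * b i) *: y i.
Proof.
case=> _ hi h.
have h0 : \sum_i (c i - d i) *: y i = 0.
  by under eq_bigr do rewrite scalerBl; rewrite sumrB h subrr.
apply/eqP; rewrite -subr_eq0 -sumrB; apply/eqP; apply: big1 => i _.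
rewrite -scalerBl -mulrBl; apply: kill; rewrite mulrC; apply: dvdD_mull.
exact: hi h0 i.
Qed.

Lemma basis_replace (y : 'I_r -> M) (c : 'I_r -> D) (p : 'I_r) :
  basis y -> ~ dvdD alpha (c p) ->
  basis (fun i => if i == p then \sum_k c k *: y k else y i).
Proof.
move=> [hs hi] ncp; set z := \sum_k c k *: y k.
have [u hu] := inv_mod hPID halpha n ncp.
have expand : forall d : 'I_r -> D,
  \sum_i d i *: (if i == p then z else y i) =
  \sum_i (d p * c i + (if i == p then 0 else d i)) *: y i.
  move=> d.
  under [RHS]eq_bigr do rewrite scalerDl.
  rewrite big_split /= (bigD1 p) //= eqxx.
  rewrite [X in _ = _ + X](bigD1 p) //= eqxx scale0r add0r.
  under [X in _ = _ + X]eq_bigr => i /negPf -> do [].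
  under eq_bigr => i /negPf -> do [].
  rewrite /z scaler_sumr; congr (_ + _); apply: eq_bigr => i _; by rewrite scalerA.
split.
  move=> m; have [d ->] := hs m.
  exists (fun i => if i == p then d p * u else d i - d p * u * c i).
  rewrite expand eqxx; apply: eq_bigr => i _.
  case: eqP => [->|/eqP hip].
    apply/eqP; rewrite -subr_eq0 -scalerBl; apply/eqP; apply: kill.
    first [ rewrite (_ : _ - _ = d p * (u * c p - 1)); [exact: dvdD_mull | ring]
          | rewrite (_ : _ - _ = - (d p * (u * c p - 1))); [exact/dvdD_opp/dvdD_mull | ring]].
  by rewrite addrC subrK.
move=> d; rewrite expand => /hi hd i.
have hdp : dvdD (alpha ^+ n) (d p).
  by apply: (cancel_mod hPID halpha ncp); have := hd p; rewrite eqxx addr0.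
case: (eqVneq i p) => [->//|hip].
have := hd i; rewrite (negPf hip) => h.
have -> : d i = (d p * c i + d i) - c i * d p by ring.
by apply: dvdD_add => //; apply/dvdD_opp/dvdD_mull.
Qed.

End Mod.

Section Main.
Variables (D : idomainType) (hPID : is_PID D) (alpha : D)
  (halpha : prime_elt alpha) (n : nat) (hn : (1 <= n)%N)
  (r j : nat) (hj1 : (1 <= j)%N) (hjr : (j <= r)%N)
  (M : lmodType D)
  (hMbar : forall m : M, alpha ^+ n *: m = 0)
  (e : 'I_r -> M)
  (he_span : forall m : M, exists c : 'I_r -> D, m = \sum_(i < r) c i *: e i)
  (he_indep : forall c : 'I_r -> D,
      \sum_(i < r) c i *: e i = 0 -> forall i, dvdD (alpha ^+ n) (c i))
  (x : 'I_r -> M) (nn : 'I_r -> nat)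
  (hann : forall i : 'I_r, (i < j)%N ->
      forall d : D, d *: x i = 0 <-> dvdD (alpha ^+ nn i) d)
  (hann_proper : forall i : 'I_r, (i < j)%N -> ~ (forall d : D, d *: x i = 0))
  (hdirect : forall c : 'I_r -> D,
      \sum_(i < r | (i < j)%N) c i *: x i = 0 ->
      forall i : 'I_r, (i < j)%N -> c i *: x i = 0).

Lemma nn_bounds (i : 'I_r) : (i < j)%N -> (1 <= nn i)%N /\ (nn i <= n)%N.
Proof.
move=> hi; split.
  rewrite lt0n; apply/negP => /eqP h0; apply: (hann_proper hi) => d.
  by apply/(hann hi); rewrite h0 expr0; exists d; rewrite mulr1.
apply: (pow_le halpha); apply/(hann hi); exact: hMbar.
Qed.

Lemma z_ex (i : 'I_r) : (i < j)%N -> exists z, x i = alpha ^+ (n - nn i) *: z.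
Proof.
move=> hi; have [_ hle] := nn_bounds hi.
have [c hc] := he_span (x i).
have h0 : \sum_k (alpha ^+ nn i * c k) *: e k = 0.
  under eq_bigr do rewrite -scalerA; rewrite -scaler_sumr -hc.
  by apply/(hann hi)/dvdD_refl.
have ht k : dvdD (alpha ^+ (n - nn i)) (c k).
  by apply: (cancel_pow halpha) => //; have := he_indep h0 k; rewrite mulrC.
exists (\sum_k (sval (cid (ht k))) *: e k).
rewrite hc scaler_sumr; apply: eq_bigr => k _.
by rewrite scalerA mulrC -(svalP (cid (ht k))).
Qed.


Variable z : 'I_r -> M.
Hypothesis hz : forall i : 'I_r, (i < j)%N -> x i = alpha ^+ (n - nn i) *: z i.

Lemma z_pow (i : 'I_r) : (i < j)%N ->
  alpha ^+ n.-1 *: z i = alpha ^+ (nn i).-1 *: x i.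
Proof.
move=> hi; have [h1 h2] := nn_bounds hi.
rewrite hz // scalerA -exprD; congr (_ ^+ _ *: _).
lia.
Qed.

Lemma steinitz (t : nat) : (t <= j)%N ->
  exists y, basis alpha n y /\ forall i : 'I_r, (i < t)%N -> y i = z i.
Proof.
elim: t => [_|t IH htj].
  by exists e; split => //; split.
have [y [[hs hi] hyz]] := IH (ltnW htj).
have htr : (t < r)%N := leq_trans htj hjr.
pose T : 'I_r := Ordinal htr.
have [c hc] := hs (z T).
have [p [htp ncp]] : exists p : 'I_r, (t <= p)%N /\ ~ dvdD alpha (c p).
  apply: contrapT => hno.
  have hall (p : 'I_r) : (t <= p)%N -> dvdD alpha (c p).
    by move=> htp; apply: contrapT => nd; apply: hno; exists p; split.
  pose ee (k : 'I_r) := if k == T then alpha ^+ (nn T).-1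
     else if (k < t)%N then - (c k * alpha ^+ (nn k).-1) else 0.
  have hsum : alpha ^+ n.-1 *: z T =
      \sum_(k < r | (k < t)%N) (c k * alpha ^+ (nn k).-1) *: x k.
    rewrite hc scaler_sumr [RHS]big_mkcond /=; apply: eq_bigr => k _.
    case: ifP => hkt.
      rewrite hyz // scalerA [alpha ^+ n.-1 * _]mulrC -!scalerA z_pow //.
      exact: ltn_trans hkt htj.
    have [s hs'] : dvdD alpha (c k) by apply: hall; rewrite leqNgt hkt.
    rewrite scalerA; apply: (kill hMbar); exists s.
    by rewrite hs' mulrCA -exprSr prednK.
  have hT : (T < j)%N by [].
  have := hdirect (c := ee) _ hT.
  rewrite /ee eqxx => h.
  have : alpha ^+ (nn T).-1 *: x T = 0.
    apply: h; rewrite big_mkcond /=.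
    have -> : \sum_(k < r) (if (k < j)%N then (if k == T then alpha ^+ (nn T).-1
         else if (k < t)%N then - (c k * alpha ^+ (nn k).-1) else 0) *: x k else 0)
       = \sum_(k < r) ((if k == T then alpha ^+ (nn T).-1 *: x T else 0) -
              (if (k < t)%N then (c k * alpha ^+ (nn k).-1) *: x k else 0)).
      apply: eq_bigr => k _.
      case: (eqVneq k T) => [->|hkT].
        by rewrite hT /= ltnn subr0.
      case: ifP => hkj.
        case: (ltnP k t) => _; first by rewrite scaleNr sub0r.
        by rewrite scale0r subr0.
      case: ifP => hkt; last by rewrite subr0.
      by move: hkj; rewrite (ltn_trans hkt).
    rewrite sumrB -big_mkcond /= -big_mkcond /= big_pred1_eq -z_pow // -hsum.
    by rewrite subrr.
  move/(hann hT); have [h1 _] := nn_bounds hT.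
  by rewrite -{1}(prednK h1); apply: not_unit_pow.
pose y1 := fun i => if i == p then \sum_k c k *: y k else y i.
have hb1 : basis alpha n y1 by apply: basis_replace.
exists (fun i => y1 (tperm p T i)); split; first exact: basis_perm.
move=> i hit; rewrite /y1.
case: (ltnP i t) => hit'.
  have hip : i != p by apply/eqP => hip; move: hit'; rewrite hip ltnNge htp.
  have hiT : i != T by apply/eqP => hiT; move: hit'; rewrite hiT ltnn.
  have h1 : p != i by rewrite eq_sym.
  have h2 : T != i by rewrite eq_sym.
  by rewrite tpermD // (negPf hip) hyz.
have hiT : i = T by apply: val_inj => /=; apply/eqP; rewrite eqn_leq hit'; rewrite ltnS in hit; rewrite hit.
by rewrite hiT tpermR eqxx -hc.
Qed.

Lemma final :
  exists (P : lmodType D) (f : {linear M -> P}) (g : {linear 'rV[D]_r -> P}),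
    [/\ (forall p : P, exists m : M, f m = p),
        (forall m : M, f m = 0 <->
           exists c : 'I_r -> D, m = \sum_(i < r | (i < j)%N) c i *: x i),
        (forall p : P, exists v : 'rV[D]_r, g v = p) &
        (forall v : 'rV[D]_r, g v = 0 <->
           forall i : 'I_r,
             dvdD (alpha ^+ (n - (if (i < j)%N then nn i else 0%N))) (v ord0 i))].
Proof.
have [y [hb hyz]] := steinitz (leqnn j).
have hx (i : 'I_r) : (i < j)%N -> x i = alpha ^+ (n - nn i) *: y i.
  by move=> hi; rewrite hyz // hz.
pose w (i : 'I_r) := if (i < j)%N then nn i else 0%N.
have hw (i : 'I_r) : (w i <= n)%N.
  by rewrite /w; case: ifP => hi //; have [] := nn_bounds hi.
pose g0 := fun v : 'rV[D]_r => \sum_i (v ord0 i * alpha ^+ w i) *: y i.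
have hg0 : linear g0.
  move=> a u v; rewrite /g0 scaler_sumr -big_split; apply: eq_bigr => i _.
  by rewrite !mxE /= scalerA -scalerDl; congr (_ *: _); ring.
have cf m : {c : 'I_r -> D | m = \sum_i c i *: y i} by apply: cid; exact: hb.1.
pose h := fun m => g0 (\row_i sval (cf m) i).
have hcoord m (d : 'I_r -> D) : m = \sum_i d i *: y i ->
    h m = \sum_i (d i * alpha ^+ w i) *: y i.
  move=> hm; rewrite /h /g0; under eq_bigr do rewrite mxE.
  apply: (coord_congr hMbar (fun i => alpha ^+ w i) hb).
  by rewrite -(svalP (cf m)).
have hh : linear h.
  move=> a m1 m2.
  rewrite (hcoord (a *: m1 + m2) (fun i => a * sval (cf m1) i + sval (cf m2) i)).
    rewrite /h /g0 scaler_sumr -big_split; apply: eq_bigr => i _.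
    by rewrite !mxE /= scalerA -scalerDl; congr (_ *: _); ring.
  rewrite {1}(svalP (cf m1)) {1}(svalP (cf m2)) scaler_sumr -big_split.
  by apply: eq_bigr => i _; rewrite scalerDl scalerA.
have hin m : h m \in imgP hg0 by apply: imgP_mem.
have hg0v v : g0 v = \sum_i (v ord0 i * alpha ^+ w i) *: y i by [].
have kerg (v : 'rV[D]_r) : g0 v = 0 <-> forall i, dvdD (alpha ^+ (n - w i)) (v ord0 i).
  split.
    move=> h0 i; apply: (cancel_pow halpha) => //; exact: hb.2 _ h0 i.
  move=> hd; apply: big1 => i _; apply: (kill hMbar).
  have [t ->] := hd i; exists t; by rewrite -mulrA -exprD subnK.
exists (Img hg0), (kI hh hin), (gI hg0); split.
- case=> v hv; move/asboolP: (hv) => [u hu]; exists (\sum_i u ord0 i *: y i).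
  apply: val_inj => /=; rewrite hu; exact: hcoord.
- move=> m; rewrite Img_eq0 /=; split.
    have [c hc] := cf m.
    move=> h0.
    have /kerg hd0 : g0 (\row_i c i) = 0.
      by rewrite /g0; under eq_bigr do rewrite mxE; rewrite -(hcoord m c hc).
    have hd i : dvdD (alpha ^+ (n - w i)) (c i) by have := hd0 i; rewrite mxE.
    have [t ht] : exists t : 'I_r -> D, forall i, c i = t i * alpha ^+ (n - w i).
      by exists (fun i => sval (cid (hd i))) => i; exact: (svalP (cid (hd i))).
    exists t.
    rewrite hc [RHS]big_mkcond /=; apply: eq_bigr => i _.
    rewrite ht.
    rewrite /w; case: ifP => hi.
      by rewrite hx // scalerA.
    by rewrite subn0 -scalerA hMbar scaler0.
  case=> d hm.
  rewrite (hcoord m (fun i => if (i < j)%N then d i * alpha ^+ (n - nn i) else 0)).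
    apply: big1 => i _; rewrite /w; case: ifP => hi; last by rewrite mul0r scale0r.
    apply: (kill hMbar); exists (d i); rewrite -mulrA -exprD subnK //.
    by have [] := nn_bounds hi.
  rewrite hm big_mkcond /=; apply: eq_bigr => i _.
  by case: ifP => hi; rewrite ?scale0r // hx // scalerA.
- case=> v hv; move/asboolP: (hv) => [u hu]; exists u; apply: val_inj => /=; by rewrite hu.
- move=> v; rewrite Img_eq0 /=; exact: kerg.
Qed.

End Main.

Theorem lemma11 (D : idomainType) (hPID : is_PID D) (alpha : D)
  (halpha : prime_elt alpha) (n : nat) (hn : (1 <= n)%N)
  (r j : nat) (hj1 : (1 <= j)%N) (hjr : (j <= r)%N)
  (M : lmodType D)
  (hMbar : forall m : M, alpha ^+ n *: m = 0)
  (e : 'I_r -> M)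
  (he_span : forall m : M, exists c : 'I_r -> D, m = \sum_(i < r) c i *: e i)
  (he_indep : forall c : 'I_r -> D,
      \sum_(i < r) c i *: e i = 0 -> forall i, dvdD (alpha ^+ n) (c i))
  (x : 'I_r -> M) (nn : 'I_r -> nat)
  (hann : forall i : 'I_r, (i < j)%N ->
      forall d : D, d *: x i = 0 <-> dvdD (alpha ^+ nn i) d)
  (hann_proper : forall i : 'I_r, (i < j)%N -> ~ (forall d : D, d *: x i = 0))
  (hdirect : forall c : 'I_r -> D,
      \sum_(i < r | (i < j)%N) c i *: x i = 0 ->
      forall i : 'I_r, (i < j)%N -> c i *: x i = 0) :
  exists (P : lmodType D) (f : {linear M -> P}) (g : {linear 'rV[D]_r -> P}),
    [/\ (forall p : P, exists m : M, f m = p),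
        (forall m : M, f m = 0 <->
           exists c : 'I_r -> D, m = \sum_(i < r | (i < j)%N) c i *: x i),
        (forall p : P, exists v : 'rV[D]_r, g v = p) &
        (forall v : 'rV[D]_r, g v = 0 <->
           forall i : 'I_r,
             dvdD (alpha ^+ (n - (if (i < j)%N then nn i else 0%N))) (v ord0 i))].
Proof.
have hzex (i : 'I_r) : exists zz : M, (i < j)%N -> x i = alpha ^+ (n - nn i) *: zz.
  case: (ltnP i j) => hi; last by exists 0.
  have [zz hzz] := z_ex halpha hMbar he_span he_indep hann hann_proper hi.
  by exists zz.
pose z := fun i => sval (cid (hzex i)).
have hz (i : 'I_r) : (i < j)%N -> x i = alpha ^+ (n - nn i) *: z i.
  exact: (svalP (cid (hzex i))).
exact: (final hPID halpha hn hj1 hjr hMbar he_span he_indep hann hann_proper hdirect hz).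
Qed.
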